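(* Let us denote by $x_c(x)$ the abscissa of the first collision point of the trajectory starting from $x \in \Sigma$ with the upper boundary of $\hat{D}$. For all $x \in \Sigma$ such that $\alpha(x_c(x))$ is defined, we have \begin{displaymath} f'(x) = \frac{\sin(\theta + \alpha(x_c(x)))}{\sin(\theta-\alpha(x_c(x)))} . \end{displaymath}
   Context: Setting: an internal-wave billiard (a point particle moving at unit speed in a planar table, reflected so that the angles of incident and reflected velocities with the vertical are equal) in a table $D$ of height $1/2$ with horizontal bases, a vertical left side, and right side the graph of a piecewise $C^1$, strictly decreasing, concave function (possibly plus a vertical segment attached to its lower end). The dynamics is unfolded to a linear flow of unit speed and fixed direction $\theta$ (angle with the vertical) on $\hat{D}\subset\mathbb{R}^2$, a 4-fold copy of $D$, whose upper boundary is the graph of an even function $b:[-1/2,1/2]\to\mathbb{R}^+$ that is piecewise $C^1$, concave, and non-increasing on $[0,1/2]$, the lower boundary being its mirror image; opposite boundary points (same abscissa on upper/lower boundary, same ordinate on left/right boundary) are identified. Set $\alpha(x):=\arctan(b'(x))$ (defined except at countably many points), with $\alpha(-1/2)=\alpha_M$, $\alpha(1/2)=-\alpha_M$. The direction satisfies $\theta\in(\alpha_M,\pi/2)$. $\Sigma$ is a horizontal segment of length $1$ spanning $\hat D$ (a cross-section, topologically a circle after the identifications), and $f:\Sigma\to\Sigma$ is the first-return (Poincaré) map of the linear flow; between consecutive returns a trajectory hits the upper boundary once and continues from the opposite point of the lower boundary. *)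

(* Defs.v *)
From Stdlib Require Import Reals ZArith ClassicalEpsilon.
From Coquelicot Require Import Coquelicot.
Open Scope R_scope.

Definition cont_on (g : R -> R) (a c : R) : Prop :=
  forall x, a <= x <= c -> forall eps, 0 < eps ->
    exists delta, 0 < delta /\
      forall y, a <= y <= c -> Rabs (y - x) < delta -> Rabs (g y - g x) < eps.

Definition piecewise_C1 (g : R -> R) (a c : R) : Prop :=
  exists (n : nat) (t : nat -> R),
    t O = a /\ t n = c /\ (forall i, (i < n)%nat -> t i < t (S i)) /\
    cont_on g a c /\
    forall i, (i < n)%nat -> exists g' : R -> R,
      cont_on g' (t i) (t (S i)) /\
      forall y, t i < y < t (S i) -> is_derive g y (g' y).

Definition concave_on (g : R -> R) (a c : R) : Prop :=
  forall x y l, a <= x <= c -> a <= y <= c -> 0 <= l <= 1 ->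
    l * g x + (1 - l) * g y <= g (l * x + (1 - l) * y).

(* alpha(x) = arctan(b'(x)) (meaningful where b is differentiable). *)
Definition alpha (b : R -> R) (x : R) : R := atan (Derive b x).

(* Reduction of an abscissa of the universal cover to [-1/2, 1/2). *)
Definition red (X : R) : R := X - IZR (Int_part (X + 1/2)).

(* Unfolded flow: unit speed, direction (cos theta, sin theta); the cross
   section Sigma is the horizontal segment at height y0, abscissae in
   [-1/2,1/2] with the endpoints identified (we work on the universal cover).
   The trajectory starting from (x, y0) is at (x + t cos theta, y0 + t sin theta)
   (abscissa taken modulo 1). *)
Definition hits_upper (b : R -> R) (theta y0 x t : R) : Prop :=
  exists k : Z,
    -1/2 <= x + t * cos theta - IZR k <= 1/2 /\
    y0 + t * sin theta = b (x + t * cos theta - IZR k).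

Definition is_first_collision_time (b : R -> R) (theta y0 x t : R) : Prop :=
  0 < t /\ hits_upper b theta y0 x t /\
  forall s, 0 < s < t -> ~ hits_upper b theta y0 x s.

(* The first collision time (it exists and is unique under the standing
   hypotheses; otherwise the value is irrelevant). *)
Definition tcoll (b : R -> R) (theta y0 x : R) : R :=
  epsilon (inhabits 0) (is_first_collision_time b theta y0 x).

Definition x_c (b : R -> R) (theta y0 x : R) : R :=
  red (x + tcoll b theta y0 x * cos theta).

(* Lift of the first-return map f : Sigma -> Sigma.  After the collision at
   (X_c, b(x_c)) the trajectory continues from the opposite point
   (X_c, -b(x_c)) of the lower boundary and returns to height y0 after
   travelling the horizontal distance (y0 + b(x_c)) cot theta.
   f = (return_lift mod 1), and f' is the derivative of this lift. *)
Definition return_lift (b : R -> R) (theta y0 : R) (x : R) : R :=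
  x + tcoll b theta y0 x * cos theta
    + (y0 + b (x_c b theta y0 x)) * cos theta / sin theta.

(* Main.v *)
Require Import Defs.
From Stdlib Require Import Reals Lra Lia ZArith ClassicalEpsilon.
From Coquelicot Require Import Coquelicot.
Open Scope R_scope.

Lemma chord (b : R -> R) (hconc : concave_on b (-1/2) (1/2)) p q r :
  -1/2 <= p -> p < q -> q < r -> r <= 1/2 ->
  (r - q) * b p + (q - p) * b r <= (r - p) * b q.
Proof.
  intros h1 h2 h3 h4.
  set (l := (r - q) / (r - p)).
  assert (Hl : 0 <= l <= 1).
  { unfold l; split.
    - apply Rmult_le_pos; [lra|]. left; apply Rinv_0_lt_compat; lra.
    - apply Rmult_le_reg_r with (r - p); [lra|].
      unfold Rdiv; rewrite Rmult_assoc, Rinv_l by lra. lra. }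
  pose proof (hconc p r l ltac:(lra) ltac:(lra) Hl) as H.
  assert (Hq : l * p + (1 - l) * r = q) by (unfold l; field; lra).
  rewrite Hq in H.
  assert (E1 : (r - q) * b p + (q - p) * b r = (r - p) * (l * b p + (1 - l) * b r))
    by (unfold l; field; lra).
  rewrite E1. apply Rmult_le_compat_l; lra.
Qed.

Lemma div_ge (a b' c d' : R) : 0 < b' -> 0 < d' -> c * b' <= a * d' -> c / d' <= a / b'.
Proof.
  intros hb hd h.
  assert (E : a / b' - c / d' = (a * d' - c * b') * / (b' * d')) by (field; lra).
  assert (0 <= (a * d' - c * b') * / (b' * d')).
  { apply Rmult_le_pos; [lra|]. left; apply Rinv_0_lt_compat; nra. }
  lra.
Qed.

Lemma slope_le_d (b : R -> R) (d : R)
  (hconc : concave_on b (-1/2) (1/2))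
  (hd : filterlim (fun h => (b (-1/2 + h) - b (-1/2)) / h) (at_right 0) (locally d))
  u v : -1/2 <= u -> u < v -> v <= 1/2 -> b v - b u <= d * (v - u).
Proof.
  intros h1 h2 h3.
  destruct (Rle_or_lt (b v - b u) (d * (v - u))) as [H|H]; [exact H|exfalso].
  set (s := (b v - b u) / (v - u)).
  assert (Hs : d < s).
  { unfold s. apply Rmult_lt_reg_r with (v - u); [lra|].
    unfold Rdiv; rewrite Rmult_assoc, Rinv_l by lra. lra. }
  assert (He : 0 < s - d) by lra.
  pose proof (proj1 (filterlim_locally _ _) hd (mkposreal _ He)) as Hf.
  destruct Hf as [del Hdel]. simpl in Hdel.
  set (h := Rmin (del / 2) ((v + 1/2) / 2)).
  assert (Hh0 : 0 < h) by (unfold h; apply Rmin_pos; pose proof (cond_pos del); lra).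
  assert (Hh1 : h <= del / 2) by apply Rmin_l.
  assert (Hh2 : h <= (v + 1/2) / 2) by apply Rmin_r.
  assert (Hb : ball 0 del h).
  { change (Rabs (h - 0) < del). rewrite Rminus_0_r, Rabs_pos_eq by lra.
    pose proof (cond_pos del); lra. }
  specialize (Hdel h Hb Hh0).
  change (Rabs ((b (-1/2 + h) - b (-1/2)) / h - d) < s - d) in Hdel.
  apply Rabs_def2 in Hdel. destruct Hdel as [Hq _].
  set (p := -1/2) in *. set (q := -1/2 + h) in *.
  (* slope(p,q) >= slope(p,v) >= slope(u,v) = s *)
  assert (C1 := chord b hconc p q v ltac:(unfold p; lra) ltac:(unfold p,q; lra) ltac:(unfold q; lra) h3).
  assert (S1 : (b v - b p) / (v - p) <= (b q - b p) / h).
  { apply div_ge; [lra| unfold p; lra|].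
    replace h with (q - p) by (unfold q, p; ring). nra. }
  assert (S2 : s <= (b v - b p) / (v - p)).
  { destruct (Req_dec u p) as [E|E].
    - unfold s; rewrite E; lra.
    - assert (C2 := chord b hconc p u v ltac:(unfold p; lra) ltac:(unfold p in *; lra) h2 h3).
      unfold s. apply div_ge; [unfold p in *; lra| lra|].
      assert (EE : (b v - b p) * (v - u) - (b v - b u) * (v - p) = (v - p) * b u - (v - u) * b p - (u - p) * b v) by ring.
      lra. }
  change (b (p + h)) with (b q) in Hq.
  lra.
Qed.

Lemma slope_ge_negd (b : R -> R) (d : R)
  (hconc : concave_on b (-1/2) (1/2))
  (heven : forall x, -1/2 <= x <= 1/2 -> b (- x) = b x)
  (hd : filterlim (fun h => (b (-1/2 + h) - b (-1/2)) / h) (at_right 0) (locally d))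
  u v : -1/2 <= u -> u < v -> v <= 1/2 -> b u - b v <= d * (v - u).
Proof.
  intros h1 h2 h3.
  pose proof (slope_le_d b d hconc hd (-v) (-u) ltac:(lra) ltac:(lra) ltac:(lra)) as H.
  rewrite (heven u) in H by lra. rewrite (heven v) in H by lra. lra.
Qed.

Lemma d_nonneg (b : R -> R) (d : R)
  (hconc : concave_on b (-1/2) (1/2))
  (heven : forall x, -1/2 <= x <= 1/2 -> b (- x) = b x)
  (hd : filterlim (fun h => (b (-1/2 + h) - b (-1/2)) / h) (at_right 0) (locally d)) :
  0 <= d.
Proof.
  pose proof (slope_le_d b d hconc hd (-1/2) (1/2) ltac:(lra) ltac:(lra) ltac:(lra)) as H.
  pose proof (heven (1/2) ltac:(lra)) as E.
  replace (- (1/2)) with (-1/2) in E by field. lra.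
Qed.

Lemma bmin (b : R -> R)
  (heven : forall x, -1/2 <= x <= 1/2 -> b (- x) = b x)
  (hnoninc : forall x y, 0 <= x -> x <= y -> y <= 1/2 -> b y <= b x)
  z : -1/2 <= z <= 1/2 -> b (1/2) <= b z.
Proof.
  intros hz. destruct (Rle_or_lt 0 z).
  - apply hnoninc; lra.
  - rewrite <- (heven z) by lra. apply hnoninc; lra.
Qed.

Lemma red_bounds X : -1/2 <= red X < 1/2.
Proof.
  unfold red. pose proof (base_Int_part (X + 1/2)). lra.
Qed.

Lemma Int_part_unique r k : IZR k <= r < IZR k + 1 -> Int_part r = k.
Proof.
  intros H. unfold Int_part.
  assert (E : (k + 1)%Z = up r).
  { apply tech_up; rewrite plus_IZR; simpl; lra. }
  lia.
Qed.

Lemma Z_cases X Y : X <= Y ->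
  Int_part (X + 1/2) = Int_part (Y + 1/2) \/
  IZR (Int_part (X + 1/2)) + 1 <= IZR (Int_part (Y + 1/2)).
Proof.
  intros H.
  pose proof (base_Int_part (X + 1/2)). pose proof (base_Int_part (Y + 1/2)).
  set (k := Int_part (X + 1/2)) in *. set (m := Int_part (Y + 1/2)) in *.
  assert (Hkm : (k < m + 1)%Z).
  { apply lt_IZR. rewrite plus_IZR. simpl. lra. }
  destruct (Z.eq_dec k m) as [E|E]; [left; exact E|right].
  assert (Hk : (k + 1 <= m)%Z) by lia.
  apply IZR_le in Hk. rewrite plus_IZR in Hk. simpl in Hk. lra.
Qed.

Lemma B_lip_up (b : R -> R) (d : R)
  (hconc : concave_on b (-1/2) (1/2))
  (heven : forall x, -1/2 <= x <= 1/2 -> b (- x) = b x)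
  (hnoninc : forall x y, 0 <= x -> x <= y -> y <= 1/2 -> b y <= b x)
  (hd : filterlim (fun h => (b (-1/2 + h) - b (-1/2)) / h) (at_right 0) (locally d))
  X Y : X <= Y -> b (red Y) - b (red X) <= d * (Y - X).
Proof.
  intros H. pose proof (d_nonneg b d hconc heven hd) as Hd.
  pose proof (red_bounds X). pose proof (red_bounds Y).
  pose proof (base_Int_part (X + 1/2)). pose proof (base_Int_part (Y + 1/2)).
  destruct (Z_cases X Y H) as [E|E]; unfold red in *; [rewrite E in *|].
  - destruct (Req_dec X Y) as [E2|E2]; [subst; lra|].
    replace (Y - X) with ((Y - IZR (Int_part (Y + 1/2))) - (X - IZR (Int_part (Y + 1/2)))) by ring.
    apply slope_le_d; auto; lra.
  - set (k := Int_part (X + 1/2)) in *. set (m := Int_part (Y + 1/2)) in *.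
    pose proof (bmin b heven hnoninc (X - IZR k) ltac:(lra)) as Hm.
    pose proof (heven (1/2) ltac:(lra)) as E1.
    replace (- (1/2)) with (-1/2) in E1 by field.
    assert (HH2 : b (Y - IZR m) - b (-1/2) <= d * (Y - IZR m + 1/2)).
    { destruct (Req_dec (Y - IZR m) (-1/2)) as [E3|E3].
      - rewrite E3. nra.
      - replace (Y - IZR m + 1/2) with ((Y - IZR m) - (-1/2)) by lra.
        apply slope_le_d; auto; lra. }
    assert (d * (Y - IZR m + 1/2) <= d * (Y - X)) by (apply Rmult_le_compat_l; lra).
    lra.
Qed.

Lemma B_lip_down (b : R -> R) (d : R)
  (hconc : concave_on b (-1/2) (1/2))
  (heven : forall x, -1/2 <= x <= 1/2 -> b (- x) = b x)
  (hnoninc : forall x y, 0 <= x -> x <= y -> y <= 1/2 -> b y <= b x)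
  (hd : filterlim (fun h => (b (-1/2 + h) - b (-1/2)) / h) (at_right 0) (locally d))
  X Y : X <= Y -> b (red X) - b (red Y) <= d * (Y - X).
Proof.
  intros H. pose proof (d_nonneg b d hconc heven hd) as Hd.
  pose proof (red_bounds X). pose proof (red_bounds Y).
  pose proof (base_Int_part (X + 1/2)). pose proof (base_Int_part (Y + 1/2)).
  destruct (Z_cases X Y H) as [E|E]; unfold red in *; [rewrite E in *|].
  - destruct (Req_dec X Y) as [E2|E2]; [subst; lra|].
    replace (Y - X) with ((Y - IZR (Int_part (Y + 1/2))) - (X - IZR (Int_part (Y + 1/2)))) by ring.
    apply slope_ge_negd; auto; lra.
  - set (k := Int_part (X + 1/2)) in *. set (m := Int_part (Y + 1/2)) in *.
    pose proof (bmin b heven hnoninc (Y - IZR m) ltac:(lra)) as Hm.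
    assert (HH2 : b (X - IZR k) - b (1/2) <= d * (1/2 - (X - IZR k))).
    { apply slope_ge_negd; auto; lra. }
    assert (d * (1/2 - (X - IZR k)) <= d * (Y - X)) by (apply Rmult_le_compat_l; lra).
    lra.
Qed.

Lemma hit_B (b : R -> R)
  (heven : forall x, -1/2 <= x <= 1/2 -> b (- x) = b x)
  X k : -1/2 <= X - IZR k <= 1/2 -> b (X - IZR k) = b (red X).
Proof.
  intros H. pose proof (base_Int_part (X + 1/2)). unfold red.
  set (k0 := Int_part (X + 1/2)) in *.
  assert (H1 : (k0 - k > -1)%Z).
  { apply Z.lt_gt, lt_IZR. rewrite minus_IZR. simpl. lra. }
  assert (H2 : (k0 - k <= 1)%Z).
  { apply le_IZR. rewrite minus_IZR. simpl. lra. }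
  destruct (Z.eq_dec k0 k) as [E|E]; [subst; reflexivity|].
  assert (E2 : k0 = (k + 1)%Z) by lia.
  rewrite E2, plus_IZR in *. simpl in *.
  assert (E3 : X - IZR k = 1/2) by lra.
  replace (X - (IZR k + 1)) with (-1/2) by lra. rewrite E3.
  pose proof (heven (1/2) ltac:(lra)) as E1.
  replace (- (1/2)) with (-1/2) in E1 by field. auto.
Qed.

Lemma trig_facts (d theta : R) : 0 <= d -> atan d < theta < PI / 2 ->
  0 < cos theta /\ 0 < sin theta /\ d < sin theta / cos theta.
Proof.
  intros Hd Ht. pose proof PI_RGT_0.
  assert (Ha : 0 <= atan d).
  { destruct Hd as [Hd|Hd]. - rewrite <- atan_0. left; apply atan_increasing; lra.
    - subst; rewrite atan_0; lra. }
  split; [apply cos_gt_0; lra|]. split; [apply sin_gt_0; lra|].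
  pose proof (atan_bound d).
  pose proof (tan_increasing (atan d) theta ltac:(lra) ltac:(lra) ltac:(lra)) as H2.
  rewrite tan_atan in H2. exact H2.
Qed.

Lemma B_abs (b : R -> R) (d : R)
  (hconc : concave_on b (-1/2) (1/2))
  (heven : forall x, -1/2 <= x <= 1/2 -> b (- x) = b x)
  (hnoninc : forall x y, 0 <= x -> x <= y -> y <= 1/2 -> b y <= b x)
  (hd : filterlim (fun h => (b (-1/2 + h) - b (-1/2)) / h) (at_right 0) (locally d))
  X Y : Rabs (b (red Y) - b (red X)) <= d * Rabs (Y - X).
Proof.
  destruct (Rle_or_lt X Y) as [H|H].
  - pose proof (B_lip_up b d hconc heven hnoninc hd X Y H).
    pose proof (B_lip_down b d hconc heven hnoninc hd X Y H).
    rewrite (Rabs_pos_eq (Y - X)) by lra. apply Rabs_le; lra.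
  - pose proof (B_lip_up b d hconc heven hnoninc hd Y X ltac:(lra)).
    pose proof (B_lip_down b d hconc heven hnoninc hd Y X ltac:(lra)).
    rewrite (Rabs_left (Y - X)) by lra. apply Rabs_le; lra.
Qed.

Lemma key (b : R -> R) (d theta y0 : R)
  (hconc : concave_on b (-1/2) (1/2))
  (heven : forall x, -1/2 <= x <= 1/2 -> b (- x) = b x)
  (hnoninc : forall x y, 0 <= x -> x <= y -> y <= 1/2 -> b y <= b x)
  (hd : filterlim (fun h => (b (-1/2 + h) - b (-1/2)) / h) (at_right 0) (locally d))
  (htheta : atan d < theta < PI / 2)
  (hy0 : y0 < b (1/2)) x :
  b (red (x + tcoll b theta y0 x * cos theta)) =
    y0 + (x + tcoll b theta y0 x * cos theta - x) * (sin theta / cos theta).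
Proof.
  pose proof (d_nonneg b d hconc heven hd) as Hd.
  destruct (trig_facts d theta Hd htheta) as [Hc [Hs HT]].
  set (T := sin theta / cos theta) in *.
  set (g := fun Y => y0 + (Y - x) * T - b (red Y)).
  assert (Hmono : forall Y Z, Y <= Z -> (Z - Y) * (T - d) <= g Z - g Y).
  { intros Y Z HYZ. pose proof (B_lip_up b d hconc heven hnoninc hd Y Z HYZ).
    unfold g. lra. }
  assert (Hhit : forall t, hits_upper b theta y0 x t -> g (x + t * cos theta) = 0).
  { intros t [k [Hk Heq]]. unfold g.
    rewrite <- (hit_B b heven _ k Hk), <- Heq. unfold T. field. lra. }
  assert (Hex : exists t, is_first_collision_time b theta y0 x t).
  { assert (Hcont : continuity g).
    { intros z. unfold continuity_pt, continue_in, limit1_in, limit_in.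
      intros eps Heps. exists (eps / (T + d + 1)). split.
      { apply Rdiv_lt_0_compat; lra. }
      intros w [_ Hw]. simpl in *. unfold R_dist in *.
      pose proof (B_abs b d hconc heven hnoninc hd z w) as HB.
      assert (E : g w - g z = (w - z) * T - (b (red w) - b (red z))) by (unfold g; ring).
      rewrite E.
      eapply Rle_lt_trans; [apply Rabs_triang|]. rewrite Rabs_Ropp, Rabs_mult.
      rewrite (Rabs_pos_eq T) by lra.
      assert (Hw2 : Rabs (w - z) * (T + d + 1) < eps).
      { apply Rmult_lt_reg_r with (/ (T + d + 1)). apply Rinv_0_lt_compat; lra.
        rewrite Rmult_assoc, Rinv_r, Rmult_1_r by lra. exact Hw. }
      pose proof (Rabs_pos (w - z)). nra. }
    assert (Hg0 : g x < 0).
    { unfold g. replace ((x - x) * T) with 0 by ring. pose proof (bmin b heven hnoninc (red x) ltac:(pose proof (red_bounds x); lra)). lra. }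
    set (M := (b (red x) - y0) / (T - d) + 1).
    assert (HM : 0 < M).
    { unfold M. pose proof (bmin b heven hnoninc (red x) ltac:(pose proof (red_bounds x); lra)). assert (0 < (b (red x) - y0) / (T - d)) by (apply Rdiv_lt_0_compat; lra). lra. }
    assert (HgM : 0 < g (x + M)).
    { pose proof (Hmono x (x + M) ltac:(lra)).
      assert (E : (x + M - x) * (T - d) = b (red x) - y0 + (T - d)) by (unfold M; field; lra).
      unfold g at 2 in H. lra. }
    destruct (IVT g x (x + M) Hcont ltac:(lra) Hg0 HgM) as [z [Hz1 Hz2]].
    assert (Hzx : x < z) by (destruct (Req_dec z x); [subst; lra | lra]).
    exists ((z - x) / cos theta). split; [|split].
    - apply Rdiv_lt_0_compat; lra.
    - exists (Int_part (z + 1/2)).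
      replace (x + (z - x) / cos theta * cos theta) with z by (field; lra).
      pose proof (red_bounds z). unfold red in *. split; [lra|].
      unfold g in Hz2. unfold T in Hz2.
      replace ((z - x) / cos theta * sin theta) with ((z - x) * (sin theta / cos theta)) by (field; lra).
      lra.
    - intros s Hs' Hh. apply Hhit in Hh.
      assert (Hlt : x + s * cos theta < z).
      { assert (s * cos theta < (z - x) / cos theta * cos theta) by (apply Rmult_lt_compat_r; lra).
        replace ((z - x) / cos theta * cos theta) with (z - x) in H by (field; lra). lra. }
      pose proof (Hmono _ _ (Rlt_le _ _ Hlt)).
      assert (0 < (z - (x + s * cos theta)) * (T - d)) by (apply Rmult_lt_0_compat; lra).
      lra. }
  pose proof (epsilon_spec (inhabits 0) _ Hex) as [_ [Hh _]].
  apply Hhit in Hh. unfold tcoll. unfold g in Hh. lra.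
Qed.

Theorem lemma2p1 (b : R -> R) (d theta y0 : R)
  (hpc : piecewise_C1 b (-1/2) (1/2))
  (hconc : concave_on b (-1/2) (1/2))
  (heven : forall x, -1/2 <= x <= 1/2 -> b (- x) = b x)
  (hnoninc : forall x y, 0 <= x -> x <= y -> y <= 1/2 -> b y <= b x)
  (hpos : forall x, -1/2 <= x <= 1/2 -> 0 < b x)
  (* d = b'(-1/2) (right derivative), so alpha_M = atan d *)
  (hd : filterlim (fun h => (b (-1/2 + h) - b (-1/2)) / h) (at_right 0) (locally d))
  (htheta : atan d < theta < PI / 2)
  (hy0 : - b (1/2) < y0 < b (1/2))
  (x : R) (hx : -1/2 <= x <= 1/2)
  (hxc : -1/2 < x_c b theta y0 x)
  (hdiff : ex_derive b (x_c b theta y0 x)) :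
  is_derive (return_lift b theta y0) x
    (sin (theta + alpha b (x_c b theta y0 x)) /
     sin (theta - alpha b (x_c b theta y0 x))).
Proof.
  pose proof (d_nonneg b d hconc heven hd) as Hd.
  destruct (trig_facts d theta Hd htheta) as [Hc [Hs HT]].
  pose proof (key b d theta y0 hconc heven hnoninc hd htheta ltac:(lra)) as Hkey.
  set (T := sin theta / cos theta) in *.
  set (X := fun x' => x' + tcoll b theta y0 x' * cos theta) in *.
  assert (Hkey' : forall x', b (red (X x')) = y0 + (X x' - x') * T) by (intros; apply Hkey).
  clear Hkey.
  set (K := 2 * y0 * cos theta / sin theta).
  assert (Hret : forall x', 2 * X x' - x' + K = return_lift b theta y0 x').
  { intros x'. unfold return_lift, x_c. fold (X x'). rewrite Hkey'.
    unfold K, T. field. lra. }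
  assert (Hlipx : forall x1 x2, (T - d) * Rabs (X x2 - X x1) <= T * Rabs (x2 - x1)).
  { intros x1 x2. pose proof (Hkey' x1). pose proof (Hkey' x2).
    destruct (Rle_or_lt (X x1) (X x2)) as [Hle|Hle].
    - pose proof (B_lip_up b d hconc heven hnoninc hd _ _ Hle).
      rewrite (Rabs_pos_eq (X x2 - X x1)) by lra.
      assert (E : (T - d) * (X x2 - X x1) <= T * (x2 - x1)).
      { rewrite H, H0 in H1.
        assert (EE : (T - d) * (X x2 - X x1) - T * (x2 - x1) = y0 + (X x2 - x2) * T - (y0 + (X x1 - x1) * T) - d * (X x2 - X x1)) by ring.
        lra. }
      pose proof (Rle_abs (x2 - x1)).
      assert (T * (x2 - x1) <= T * Rabs (x2 - x1)) by (apply Rmult_le_compat_l; lra).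
      lra.
    - pose proof (B_lip_up b d hconc heven hnoninc hd _ _ (Rlt_le _ _ Hle)).
      rewrite (Rabs_left (X x2 - X x1)) by lra.
      assert (E : (T - d) * (X x1 - X x2) <= T * (x1 - x2)).
      { rewrite H, H0 in H1.
        assert (EE : (T - d) * (X x1 - X x2) - T * (x1 - x2) = y0 + (X x1 - x1) * T - (y0 + (X x2 - x2) * T) - d * (X x1 - X x2)) by ring.
        lra. }
      pose proof (Rle_abs (- (x2 - x1))) as Hab. rewrite Rabs_Ropp in Hab.
      assert (T * (x1 - x2) <= T * Rabs (x2 - x1)) by (apply Rmult_le_compat_l; lra).
      replace (- (X x2 - X x1)) with (X x1 - X x2) by ring. lra. }
  change (x_c b theta y0 x) with (red (X x)) in *.
  set (xc := red (X x)) in *.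
  pose proof (red_bounds (X x)) as Hxcb. fold xc in Hxcb.
  set (k0 := Int_part (X x + 1/2)).
  assert (Hxck : xc = X x - IZR k0) by reflexivity.
  set (rho := Rmin (xc + 1/2) (1/2 - xc)).
  assert (Hrho : 0 < rho) by (apply Rmin_pos; lra).
  assert (Hloc : forall Y, Rabs (Y - X x) < rho -> red Y = Y - IZR k0).
  { intros Y HY. unfold red. f_equal. f_equal. apply Int_part_unique.
    pose proof (Rmin_l (xc + 1/2) (1/2 - xc)) as R1. pose proof (Rmin_r (xc + 1/2) (1/2 - xc)) as R2.
    apply Rabs_def2 in HY. fold rho in R1, R2. lra. }
  pose proof (Derive_correct _ _ hdiff) as Hder.
  apply is_derive_Reals in Hder.
  set (b' := Derive b xc) in *.
  assert (Hb'd : b' <= d).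
  { destruct (Rle_or_lt b' d) as [H|H]; [exact H|exfalso].
    destruct (Hder (b' - d) ltac:(lra)) as [del Hdel].
    set (h := Rmin (del / 2) ((1/2 - xc) / 2)).
    assert (Hh0 : 0 < h) by (unfold h; apply Rmin_pos; pose proof (cond_pos del); lra).
    assert (Hh1 : h <= del / 2) by apply Rmin_l.
    assert (Hh2 : h <= (1/2 - xc) / 2) by apply Rmin_r.
    specialize (Hdel h ltac:(lra) ltac:(rewrite Rabs_pos_eq by lra; pose proof (cond_pos del); lra)).
    apply Rabs_def2 in Hdel.
    pose proof (slope_le_d b d hconc hd xc (xc + h) ltac:(lra) ltac:(lra) ltac:(lra)) as Hsl.
    assert (Hq : (b (xc + h) - b xc) / h <= d).
    { apply Rmult_le_reg_r with h; [lra|]. unfold Rdiv. rewrite Rmult_assoc, Rinv_l by lra. lra. }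
    lra. }
  assert (HTb : 0 < T - b') by lra.
  assert (Hca : 0 < cos (atan b')) by (pose proof (atan_bound b'); apply cos_gt_0; lra).
  assert (Hsa : sin (atan b') = b' * cos (atan b')).
  { pose proof (tan_atan b') as E. unfold tan in E.
    assert (E2 : sin (atan b') = sin (atan b') / cos (atan b') * cos (atan b')) by (field; lra).
    rewrite E in E2. exact E2. }
  assert (Hl : sin (theta + atan b') / sin (theta - atan b') = (T + b') / (T - b')).
  { rewrite sin_plus, sin_minus, Hsa.
    assert (E2 : 0 < sin theta - cos theta * b').
    { assert (cos theta * b' < cos theta * T) by (apply Rmult_lt_compat_l; lra).
      unfold T in H. replace (cos theta * (sin theta / cos theta)) with (sin theta) in H by (field; lra).
      lra. }
    unfold T. field. split; [lra|]. split; [lra|].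
    replace (sin theta * cos (atan b') - cos theta * (b' * cos (atan b')))
      with ((sin theta - cos theta * b') * cos (atan b')) by ring.
    apply Rmult_integral_contrapositive; lra. }
  unfold alpha. fold b'. rewrite Hl.
  apply is_derive_ext with (f := fun x' => 2 * X x' - x' + K); [exact Hret|].
  apply is_derive_Reals.
  intros eps Heps.
  set (eta := eps * (T - d) * (T - b') / (4 * T)).
  assert (Heta : 0 < eta) by (unfold eta; apply Rdiv_lt_0_compat; [apply Rmult_lt_0_compat; [apply Rmult_lt_0_compat|]|]; lra).
  destruct (Hder eta Heta) as [del1 Hdel1].
  set (m := Rmin del1 rho).
  assert (Hm : 0 < m) by (unfold m; apply Rmin_pos; [apply cond_pos|lra]).
  assert (Hdel : 0 < m * (T - d) / T) by (apply Rdiv_lt_0_compat; [apply Rmult_lt_0_compat|]; lra).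
  exists (mkposreal _ Hdel). simpl. intros h Hh0 Hh.
  set (DX := X (x + h) - X x).
  assert (HL : (T - d) * Rabs DX <= T * Rabs h).
  { pose proof (Hlipx x (x + h)). replace (x + h - x) with h in H by ring. exact H. }
  assert (HDX : Rabs DX < m).
  { assert (T * Rabs h < T * (m * (T - d) / T)) by (apply Rmult_lt_compat_l; lra).
    replace (T * (m * (T - d) / T)) with (m * (T - d)) in H by (field; lra).
    apply Rmult_lt_reg_r with (T - d); [lra|]. lra. }
  assert (HDX1 : Rabs DX < del1) by (pose proof (Rmin_l del1 rho); fold m in H; lra).
  assert (HDX2 : Rabs DX < rho) by (pose proof (Rmin_r del1 rho); fold m in H; lra).
  assert (Hred : red (X (x + h)) = xc + DX).
  { rewrite Hloc by exact HDX2. unfold DX. lra. }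
  pose proof (Hkey' (x + h)) as K1. pose proof (Hkey' x) as K0.
  rewrite Hred in K1. fold xc in K0.
  assert (Hbd : b (xc + DX) - b xc = (DX - h) * T).
  { rewrite K1, K0. unfold DX. ring. }
  set (r := (DX - h) * T - b' * DX).
  assert (Hr : Rabs r <= eta * Rabs DX).
  { destruct (Req_dec DX 0) as [E|E].
    - assert (r = 0).
      { unfold r. rewrite <- Hbd, E, Rplus_0_r. ring. }
      rewrite H, E, Rabs_R0. lra.
    - specialize (Hdel1 DX E HDX1).
      assert (Er : r = DX * ((b (xc + DX) - b xc) / DX - b')).
      { unfold r. rewrite Hbd. field. exact E. }
      rewrite Er, Rabs_mult. rewrite Rmult_comm. apply Rmult_le_compat_r; [apply Rabs_pos|lra]. }
  assert (Eexp : (2 * X (x + h) - (x + h) + K - (2 * X x - x + K)) / h - (T + b') / (T - b')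
                 = 2 * r / (h * (T - b'))).
  { unfold r, DX. field. lra. }
  rewrite Eexp.
  unfold Rdiv. rewrite Rabs_mult, Rabs_Rinv by (apply Rmult_integral_contrapositive; lra).
  rewrite (Rabs_mult 2 r), (Rabs_mult h (T - b')).
  rewrite (Rabs_pos_eq (T - b')) by lra. rewrite (Rabs_pos_eq 2) by lra.
  assert (Hhp : 0 < Rabs h) by (apply Rabs_pos_lt; exact Hh0).
  apply Rmult_lt_reg_r with (Rabs h * (T - b')); [apply Rmult_lt_0_compat; lra|].
  rewrite Rmult_assoc, Rinv_l, Rmult_1_r by (apply Rmult_integral_contrapositive; lra).
  assert (H1 : 2 * Rabs r <= 2 * eta * Rabs DX) by lra.
  assert (H2 : 2 * eta * Rabs DX * (T - d) <= 2 * eta * (T * Rabs h)).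
  { rewrite Rmult_assoc, (Rmult_comm (Rabs DX)). apply Rmult_le_compat_l; lra. }
  assert (H3 : 2 * eta * (T * Rabs h) = eps * (T - d) * (T - b') * Rabs h / 2) by (unfold eta; field; lra).
  assert (H4 : 2 * Rabs r * (T - d) <= eps * (T - d) * (T - b') * Rabs h / 2).
  { apply Rle_trans with (2 * eta * Rabs DX * (T - d)); [apply Rmult_le_compat_r; lra|lra]. }
  assert (H5 : 2 * Rabs r <= eps * (T - b') * Rabs h / 2).
  { apply Rmult_le_reg_r with (T - d); [lra|].
    replace (eps * (T - b') * Rabs h / 2 * (T - d)) with (eps * (T - d) * (T - b') * Rabs h / 2) by field. lra. }
  assert (0 < eps * (T - b') * Rabs h) by (apply Rmult_lt_0_compat; [apply Rmult_lt_0_compat|]; lra).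
  lra.
Qed.
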